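(* Let $\mathcal{D}$ be a $\{K_3,K_4\}$-decomposition of $K_{18}$ with $\alpha=13$, let $W$ be the set of vertices $x$ with $\alpha_x\ge 2$, and for $i\in\{0,1,2,3\}$ let $t_i$ be the number of copies of $K_3$ in $\mathcal{D}$ having exactly $i$ vertices in $W$. Then $(t_0,t_1,t_2,t_3)\neq(0,2,7,4)$.
   Context: A $\{K_3,K_4\}$-decomposition of $K_v$ is a collection of subgraphs, each isomorphic to $K_3$ or $K_4$, such that every edge of $K_v$ lies in exactly one of them. $\alpha$ is the number of copies of $K_3$ in the decomposition, and for a vertex $x$, $\alpha_x$ is the number of copies of $K_3$ in the decomposition containing $x$. *)

(* Defs.v *)
From mathcomp Require Import all_boot.
Set Implicit Arguments. Unset Strict Implicit. Unset Printing Implicit Defensive.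

(* Each copy of K3/K4 is
   represented by its vertex set (a 3- or 4-subset); edge-disjointness forces
   distinct copies to have distinct vertex sets, so a set of blocks suffices. *)
Definition K34_decomposition (v : nat) (D : {set {set 'I_v}}) : Prop :=
  (forall B, B \in D -> (#|B| == 3) || (#|B| == 4)) /\
  (forall x y : 'I_v, x != y ->
     #|[set B in D | (x \in B) && (y \in B)]| = 1).

Definition triangles (v : nat) (D : {set {set 'I_v}}) : {set {set 'I_v}} :=
  [set B in D | #|B| == 3].

Definition alpha (v : nat) (D : {set {set 'I_v}}) : nat := #|triangles D|.

Definition alpha_x (v : nat) (D : {set {set 'I_v}}) (x : 'I_v) : nat :=
  #|[set B in triangles D | x \in B]|.

Definition Wset (v : nat) (D : {set {set 'I_v}}) : {set 'I_v} :=
  [set x | 2 <= alpha_x D x].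

Definition t_count (v : nat) (D : {set {set 'I_v}}) (i : nat) : nat :=
  #|[set B in triangles D | #|B :&: Wset D| == i]|.

(* Main.v *)
Require Import Defs.
From mathcomp Require Import all_boot zify.
Set Implicit Arguments. Unset Strict Implicit. Unset Printing Implicit Defensive.

Lemma sum_eq_pt (I : finType) (P : pred I) (f g : I -> nat) :
  (forall i, P i -> f i <= g i) ->
  \sum_(i | P i) f i = \sum_(i | P i) g i -> forall i, P i -> f i = g i.
Proof.
move=> le_fg eqs i Pi; apply/eqP; rewrite eqn_leq le_fg //=; rewrite leqNgt.
apply/negP=> lt_fg; move: eqs; rewrite (bigD1 i Pi) [in RHS](bigD1 i Pi) /=.
move=> e; have: \sum_(j | P j && (j != i)) f j <= \sum_(j | P j && (j != i)) g j.
  by apply: leq_sum => j /andP[Pj _]; apply: le_fg.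
lia.
Qed.

Lemma dcount (T : finType) (X : {set {set T}}) (S : {set T}) :
  \sum_(x in S) #|[set B in X | x \in B]| = \sum_(B in X) #|B :&: S|.
Proof.
have E1 x : #|[set B in X | x \in B]| = \sum_(B in X) (x \in B).
  by rewrite -sum1_card big_mkcond /= [RHS]big_mkcond; apply: eq_bigr => B _; rewrite inE; case: (B \in X); case: (x \in B).
have E2 B : #|B :&: S| = \sum_(x in S) (x \in B).
  by rewrite -sum1_card big_mkcond /= [RHS]big_mkcond; apply: eq_bigr => x _; rewrite inE andbC; case: (x \in S); case: (x \in B).
under eq_bigr do rewrite E1.
under [RHS]eq_bigr do rewrite E2.
exact: exchange_big.
Qed.

Lemma uniqB v (D : {set {set 'I_v}}) x y B1 B2 : K34_decomposition D -> x != y ->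
  B1 \in D -> B2 \in D -> x \in B1 -> y \in B1 -> x \in B2 -> y \in B2 -> B1 = B2.
Proof.
move=> [_ H] xy D1 D2 x1 y1 x2 y2; move: (H x y xy) => /eqP/cards1P[B0 E].
have: B1 \in [set B in D | (x \in B) && (y \in B)] by rewrite inE D1 x1 y1.
have: B2 \in [set B in D | (x \in B) && (y \in B)] by rewrite inE D2 x2 y2.
by rewrite E !inE => /eqP -> /eqP ->.
Qed.

Lemma degL v (D : {set {set 'I_v}}) x (S : {set 'I_v}) : K34_decomposition D ->
  \sum_(B in D | x \in B) #|B :&: (S :\ x)| = #|S :\ x|.
Proof.
move=> K; have [_ H] := K.
have E: #|S :\ x| = \sum_(y in S :\ x) #|[set B in D | (x \in B) && (y \in B)]|.
  rewrite -sum1_card; apply: eq_bigr => y; rewrite !inE => /andP[yx _].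
  by rewrite H // eq_sym.
rewrite E.
have E2 y : #|[set B in D | (x \in B) && (y \in B)]| = \sum_(B in D | x \in B) (y \in B).
  rewrite -sum1_card big_mkcond /= [RHS]big_mkcond; apply: eq_bigr => B _; rewrite inE.
  by case: (B \in D); case: (x \in B); case: (y \in B).
under [RHS]eq_bigr do rewrite E2.
rewrite (exchange_big _ _ _ (fun y => y \in S :\ x)) /=.
apply: eq_bigr => B _.
rewrite -sum1_card big_mkcond /= [RHS]big_mkcond; apply: eq_bigr => y _; rewrite inE.
by case: (y \in B); case: (y \in S :\ x).
Qed.


Definition K4s v (D : {set {set 'I_v}}) := [set B in D | #|B| == 4].

Lemma splitD v (D : {set {set 'I_v}}) (P : pred {set 'I_v}) (f : {set 'I_v} -> nat) :
  K34_decomposition D ->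
  \sum_(B in D | P B) f B = \sum_(B in triangles D | P B) f B + \sum_(B in K4s D | P B) f B.
Proof.
move=> [H _]; rewrite (bigID (fun B : {set 'I_v} => #|B| == 3) (fun B => (B \in D) && P B)) /=; congr (_ + _).
  by apply: eq_bigl => B; rewrite inE; case: (B \in D); case: (P B); case: (#|B| == 3).
apply: eq_bigl => B; rewrite inE; case BD: (B \in D) => //=.
by case/orP: (H B BD) => /eqP ->; case: (P B).
Qed.

Lemma cardID1 v (B S : {set 'I_v}) x : x \in B -> x \in S ->
  #|B :&: S| = (#|B :&: (S :\ x)|).+1.
Proof.
move=> xB xS; rewrite (cardsD1 x (B :&: S)) inE xB xS /= add1n; congr (_.+1).
by apply: eq_card => y; rewrite !inE; case: (y == x); case: (y \in B).
Qed.

Lemma tsum v (D : {set {set 'I_v}}) (F : nat -> nat) : K34_decomposition D ->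
  \sum_(B in triangles D) F #|B :&: Wset D| = \sum_(i < 4) F i * t_count D i.
Proof.
move=> [H _].
have E B : B \in triangles D -> F #|B :&: Wset D| = \sum_(i < 4) (#|B :&: Wset D| == i) * F i.
  rewrite inE => /andP[_ /eqP c3].
  have: #|B :&: Wset D| < 4 by rewrite ltnS -c3 subset_leq_card // subsetIl.
  move: #|B :&: Wset D| => k; rewrite !big_ord_recr big_ord0 /=.
  by case: k => [|[|[|[|k]]]] //= _; rewrite ?mul1n ?mul0n ?addn0 ?add0n.
rewrite (eq_bigr _ E) exchange_big /=; apply: eq_bigr => i _.
rewrite -big_distrl /= mulnC; congr (_ * _).
rewrite /t_count -sum1_card big_mkcond /= [RHS]big_mkcond; apply: eq_bigr => B _; rewrite inE.
rewrite /triangles !inE.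
by case: (B \in D); case: (#|B| == 3); case: (#|B :&: Wset D| == i).
Qed.

Lemma exch2 (I J : finType) (P : pred I) (Q : I -> J -> bool) (R : pred J) (F : I -> J -> nat) :
  \sum_(i | P i) \sum_(j | R j && Q i j) F i j = \sum_(j | R j) \sum_(i | P i && Q i j) F i j.
Proof.
have E1 : \sum_(i | P i) \sum_(j | R j && Q i j) F i j =
   \sum_i \sum_j (if P i && (R j && Q i j) then F i j else 0).
  rewrite big_mkcond /=; apply: eq_bigr => i _; case: (P i) => /=; first by rewrite big_mkcond.
  by rewrite big1.
have E2 : \sum_(j | R j) \sum_(i | P i && Q i j) F i j =
   \sum_j \sum_i (if P i && (R j && Q i j) then F i j else 0).
  rewrite big_mkcond /=; apply: eq_bigr => j _; case: (R j) => /=.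
    by rewrite big_mkcond; apply: eq_bigr => i _; case: (P i).
  by rewrite big1 // => i _; case: (P i).
by rewrite E1 E2 exchange_big.
Qed.

Lemma splitD0 v (D : {set {set 'I_v}}) (f : {set 'I_v} -> nat) :
  K34_decomposition D ->
  \sum_(B in D) f B = \sum_(B in triangles D) f B + \sum_(B in K4s D) f B.
Proof.
move=> [H _]; rewrite (bigID (fun B : {set 'I_v} => #|B| == 3) (fun B => (B \in D))) /=; congr (_ + _).
  by apply: eq_bigl => B; rewrite inE.
apply: eq_bigl => B; rewrite inE; case BD: (B \in D) => //=.
by case/orP: (H B BD) => /eqP ->.
Qed.


Lemma cardT1 v (B : {set 'I_v}) x : x \in B -> #|B :&: (setT :\ x)| = #|B|.-1.
Proof. by move=> xB; rewrite -(setIT B) (cardID1 (S := setT) xB) ?in_setT // setIT. Qed.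

Theorem mainTheorem15 (D : {set {set 'I_18}}) :
  K34_decomposition D -> alpha D = 13 ->
  (t_count D 0, t_count D 1, t_count D 2, t_count D 3) <> (0, 2, 7, 4).
Proof.
move=> K _ [] t0 t1 t2 t3.
have [K1 K2] := K.
pose b x := #|[set B in K4s D | x \in B]|.
have deg x : 2 * alpha_x D x + 3 * b x = 17.
  have := degL x setT K; rewrite (splitD _ _ K).
  have c17 : #|[set: 'I_18] :\ x| = 17.
    have := cardsD1 x [set: 'I_18]. rewrite cardsT card_ord in_setT add1n; by case.
  rewrite c17.
  rewrite (eq_bigr (fun _ => 2)); last first.
    by move=> B /andP[]; rewrite inE => /andP[_ /eqP c3] xB; rewrite cardT1 // c3.
  rewrite [X in _ + X = _](eq_bigr (fun _ => 3)); last first.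
    by move=> B /andP[]; rewrite inE => /andP[_ /eqP c3] xB; rewrite cardT1 // c3.
  by rewrite !sum_nat_cond_const /alpha_x /b => E; apply: eq_trans E; rewrite mulnC (mulnC 3).
pose W := Wset D.
have a147 x : alpha_x D x = 1 \/ alpha_x D x = 4 \/ alpha_x D x = 7.
  have := deg x; move: (alpha_x D x) (b x) => p q; lia.
have inW x : (x \in W) = (2 <= alpha_x D x) by rewrite inE.
have sumW : \sum_(x in W) alpha_x D x = 28.
  rewrite /alpha_x (dcount (triangles D) W) (tsum id K).
  by rewrite !big_ord_recr big_ord0 /= t1 t2 t3.
have sumN : \sum_(x in ~: W) alpha_x D x = 11.
  rewrite /alpha_x (dcount (triangles D) (~: W)).
  rewrite (eq_bigr (fun B => 3 - #|B :&: W|)); last first.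
    move=> B; rewrite inE => /andP[_ /eqP c3]; have := cardsID W B; rewrite setDE c3; lia.
  rewrite (tsum (fun i => 3 - i) K).
  by rewrite !big_ord_recr big_ord0 /= t0 t1 t2.
have cW : #|W| = 7.
  have h1 : \sum_(x in W) 4 <= \sum_(x in W) alpha_x D x.
    by apply: leq_sum => x; rewrite inW; case: (a147 x) => [->|[->|->]].
  have h2 : \sum_(x in ~: W) 1 <= \sum_(x in ~: W) alpha_x D x.
    by apply: leq_sum => x _; case: (a147 x) => [->|[->|->]].
  move: h1 h2; rewrite sumW sumN !sum_nat_const.
  have := cardsC W; rewrite card_ord; lia.
have cN : #|~: W| = 11 by have := cardsC W; rewrite card_ord; lia.
have aW x : x \in W -> alpha_x D x = 4.
  move=> xW; symmetry; apply: (sum_eq_pt (P := fun x => x \in W)) => //.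
    by move=> y; rewrite inW; case: (a147 y) => [->|[->|->]].
  by rewrite sumW sum_nat_const cW.
have aN x : x \in ~: W -> alpha_x D x = 1.
  move=> xW; symmetry; apply: (sum_eq_pt (P := fun x => x \in ~: W)) => //.
    by move=> y _; case: (a147 y) => [->|[->|->]].
  by rewrite sumN sum_nat_const cN.
have bW x : x \in W -> b x = 3 by move=> xW; have := deg x; rewrite aW //; lia.
have bN x : x \in ~: W -> b x = 5 by move=> xW; have := deg x; rewrite aN //; lia.
have sQW : \sum_(B in K4s D) #|B :&: W| = 21.
  rewrite -(dcount (K4s D) W) (eq_bigr (fun _ => 3)); first by rewrite sum_nat_const cW.
  exact: bW.
have sQN : \sum_(B in K4s D) #|B :&: ~: W| = 55.
  rewrite -(dcount (K4s D) (~: W)) (eq_bigr (fun _ => 5)); first by rewrite sum_nat_const cN.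
  exact: bN.
have cQ : #|K4s D| = 19.
  have : \sum_(B in K4s D) (#|B :&: W| + #|B :&: ~: W|) = \sum_(B in K4s D) 4.
    apply: eq_bigr => B; rewrite inE => /andP[_ /eqP c4].
    by have := cardsID W B; rewrite setDE c4.
  rewrite big_split /= sQW sQN sum_nat_const => h.
  by apply/eqP; rewrite -(eqn_pmul2r (_ : 0 < 4)) //; apply/eqP; exact: (esym h).
have pairs : \sum_(B in D) #|B :&: W| * (#|B :&: W|).-1 = 42.
  have E : \sum_(x in W) \sum_(B in D | x \in B) #|B :&: (W :\ x)| = 42.
    rewrite (eq_bigr (fun _ => 6)); first by rewrite sum_nat_const cW.
    move=> x xW; rewrite degL //; have := cardsD1 x W; rewrite xW cW add1n => /eqP; rewrite eqSS eq_sym; exact/eqP.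
  rewrite -E (exch2 (fun x => x \in W) (fun x (B : {set 'I_18}) => x \in B) (fun B => B \in D)
     (fun x B => #|B :&: (W :\ x)|)).
  apply: eq_bigr => B BD.
  rewrite (eq_bigr (fun _ => (#|B :&: W|).-1)); last first.
    by move=> x /andP[xW xB]; rewrite (cardID1 xB xW).
  rewrite sum_nat_cond_const; congr (_ * _); apply: eq_card => x; rewrite !inE andbC //.
have pQ : \sum_(B in K4s D) #|B :&: W| * (#|B :&: W|).-1 = 4.
  move: pairs; rewrite (splitD0 _ K) (tsum (fun i => i * i.-1) K).
  rewrite !big_ord_recr big_ord0 /= t2 t3; lia.
have kQ B : B \in K4s D -> #|B :&: W| = 1 \/ #|B :&: W| = 2.
  move=> BQ.
  have h : forall C, C \in K4s D -> 2 * #|C :&: W| = #|C :&: W| * (#|C :&: W|).-1 + 2.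
    apply: (@sum_eq_pt _ (fun B => B \in K4s D) (fun B => 2 * #|B :&: W|)
     (fun B => #|B :&: W| * (#|B :&: W|).-1 + 2)).
    - move=> C _; move: #|C :&: W| => k; case: k => [|k] //=; nia.
    - transitivity (2 * 21); first by rewrite -sQW big_distrr.
      rewrite big_split pQ sum_nat_const.
      have -> : #|[in K4s D]| = 19 by exact: cQ.
      by [].
  move: (h B BQ); move: #|B :&: W| => k; case: k => [|[|[|k]]] //=; nia.
have sub u T1 : u \in W -> T1 \in triangles D -> u \in T1 -> #|T1 :&: W| = 1 ->
    (forall K, K \in K4s D -> u \in K -> #|K :&: W| != 2) ->
    forall B, B \in triangles D -> u \in B -> B != T1 -> #|B :&: W| = 3.
  move=> uW T1t uT1 c1 noK.
  have := degL u W K; rewrite (splitD _ _ K).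
  rewrite [X in _ + X]big1; last first.
    move=> C /andP[CQ uC]; have := cardID1 uC uW.
    by case: (kQ C CQ) => [->|e]; [case| move: (noK C CQ uC); rewrite e].
  rewrite addn0 (bigD1 T1) /=; last by rewrite T1t uT1.
  have := cardID1 uT1 uW; rewrite c1 => -[] <-; rewrite add0n => E6.
  have c6 : #|W :\ u| = 6 by have := cardsD1 u W; rewrite uW cW add1n => -[].
  have h : forall C, (C \in triangles D) && (u \in C) && (C != T1) -> #|C :&: (W :\ u)| = 2.
    apply: (@sum_eq_pt _ (fun B => (B \in triangles D) && (u \in B) && (B != T1))
     (fun B => #|B :&: (W :\ u)|) (fun _ => 2)).
    - move=> C /andP[/andP[]]; rewrite inE => /andP[_ /eqP c3] uC _.
      have : #|C :&: W| <= 3 by rewrite -[X in _ <= X]c3 subset_leq_card // subsetIl.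
      by rewrite (cardID1 uC uW).
    - rewrite E6 c6 sum_nat_cond_const.
      have -> : [set x | (x \in triangles D) && (u \in x) & x != T1] = [set B in triangles D | u \in B] :\ T1.
        apply/setP => x; rewrite !inE.
        by case: (x != T1); rewrite ?andbT ?andbF.
      have := cardsD1 T1 [set B in triangles D | u \in B].
      have -> : T1 \in [set B in triangles D | u \in B] by rewrite inE T1t uT1.
      have := aW u uW; rewrite /alpha_x => -> /eqP; rewrite add1n eqSS => /eqP <-. done.
  move=> B Bt uB BT1.
  by rewrite (cardID1 uB uW) h // Bt uB BT1.
have [T [T' [TT' ET]]] : exists T T', T != T' /\ [set B in triangles D | #|B :&: W| == 1] = [set T; T'].
  by apply/cards2P; apply/eqP; exact: t1.
have oneW B : B \in triangles D -> #|B :&: W| = 1 -> B = T \/ B = T'.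
  move=> Bt c1; have : B \in [set B in triangles D | #|B :&: W| == 1] by rewrite inE Bt c1.
  by rewrite ET !inE => /orP[/eqP|/eqP]; [left|right].
have memT B : B = T \/ B = T' -> B \in triangles D /\ #|B :&: W| = 1.
  move=> e; have : B \in [set T; T'] by case: e => ->; rewrite !inE eqxx ?orbT.
  by rewrite -ET inE => /andP[-> /eqP].
have notK B C : B \in triangles D -> C \in K4s D -> B <> C.
  by rewrite !inE => /andP[_ /eqP c3] /andP[_ /eqP c4] e; move: c3; rewrite e c4.
have yin y Kq : Kq \in K4s D -> #|Kq :&: W| = 2 -> y \in Kq -> y \in ~: W -> y \in T \/ y \in T'.
  move=> KQ k2 yK yN.
  have /eqP/cards1P[Ty ETy] := aN y yN.
  have mTy B : ((B \in triangles D) && (y \in B)) = (B == Ty).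
    by have := congr1 (fun S : {set {set 'I_18}} => B \in S) ETy; rewrite /= !inE.
  have Tyt : Ty \in triangles D by have := mTy Ty; rewrite eqxx => /andP[].
  have yTy : y \in Ty by have := mTy Ty; rewrite eqxx => /andP[].
  have WyW : W :\ y = W.
    apply/setP => z; rewrite !inE; case: (eqVneq z y) => [->|] //=; by move: yN; rewrite !inE => /negbTE ->.
  have := degL y W K; rewrite WyW (splitD _ _ K) cW.
  rewrite (eq_bigl (fun B => B == Ty)) // big_pred1_eq.
  rewrite (bigD1 Kq) /=; last by rewrite KQ yK.
  have s5 : \sum_(B in K4s D | y \in B) 1 = 5 by rewrite sum_nat_cond_const muln1; exact: bN y yN.
  rewrite (bigD1 Kq) /= in s5; last by rewrite KQ yK.
  have ge : \sum_(B | (B \in K4s D) && (y \in B) && (B != Kq)) 1 <=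
            \sum_(B | (B \in K4s D) && (y \in B) && (B != Kq)) #|B :&: W|.
    by apply: leq_sum => C /andP[/andP[CQ _] _]; case: (kQ C CQ) => ->.
  rewrite k2 => E7.
  have s4 : \sum_(B | (B \in K4s D) && (y \in B) && (B != Kq)) 1 = 4 by move: s5; rewrite add1n => -[].
  rewrite s4 in ge.
  have le1 : #|Ty :&: W| <= 1.
    move: ge E7; move: (\sum_(B | _) #|B :&: W|) => c; move: #|Ty :&: W| => d; lia.
  have ne0 : #|Ty :&: W| != 0.
    apply/negP => /eqP e0.
    have : Ty \in [set B in triangles D | #|B :&: Wset D| == 0] by rewrite inE Tyt e0.
    move=> Tin; have := t0; rewrite /t_count => c0.
    by have := card0_eq c0 Ty; rewrite Tin.
  have : #|Ty :&: W| = 1 by move: le1 ne0; move: #|Ty :&: W| => d; lia.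
  by case/(oneW _ Tyt) => <-; [left|right].
have fin T1 T2 u Kq : T1 \in triangles D -> T2 \in triangles D -> u \in T1 -> u \in W ->
    Kq \in K4s D -> u \in Kq -> #|Kq :&: W| = 2 ->
    (forall y, y \in Kq -> y \in ~: W -> y \in T1 \/ y \in T2) -> False.
  move=> T1t T2t uT1 uW KQ uK k2 H.
  have DT1 : T1 \in D by move: T1t; rewrite inE => /andP[].
  have DT2 : T2 \in D by move: T2t; rewrite inE => /andP[].
  have DK : Kq \in D by move: KQ; rewrite inE => /andP[].
  have c4 : #|Kq| = 4 by move: KQ; rewrite inE => /andP[_ /eqP].
  have e := cardsID W Kq; rewrite k2 c4 in e.
  have : 1 < #|Kq :\: W|.
    by have -> : #|Kq :\: W| = 2 by apply/eqP; rewrite -(eqn_add2l 2) e.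
  case/card_gt1P => y [y' [yK y'K yy']].
  move: yK y'K; rewrite !setDE !in_setI => /andP[yK yN] /andP[y'K y'N].
  have yW : y \notin W by move: yN; rewrite in_setC.
  have y'W : y' \notin W by move: y'N; rewrite in_setC.
  have uy z : z \notin W -> u != z by apply: contraNneq => <-.
  case: (H y yK yN) => yT.
    by apply: (notK T1 Kq) => //; exact: (uniqB K (uy y yW) DT1 DK uT1 yT uK yK).
  case: (H y' y'K y'N) => y'T.
    by apply: (notK T1 Kq) => //; exact: (uniqB K (uy y' y'W) DT1 DK uT1 y'T uK y'K).
  by apply: (notK T2 Kq) => //; exact: (uniqB K yy' DT2 DK yT y'T yK y'K).
have getu B : B = T \/ B = T' -> exists2 u, u \in B & u \in W.
  move=> e; have [_ /eqP/cards1P[u Eu]] := memT B e.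
  have : u \in B :&: W by rewrite Eu set11.
  by rewrite inE => /andP[]; exists u.
have [Tt cT] := memT T (or_introl erefl).
have [T't cT'] := memT T' (or_intror erefl).
have [u uT uW] := getu T (or_introl erefl).
have [u' uT' uW'] := getu T' (or_intror erefl).
case: (boolP [exists Kq in K4s D, (u \in Kq) && (#|Kq :&: W| == 2)]).
  case/exists_inP => Kq KQ /andP[uK /eqP k2].
  exact: (fin T T' u Kq Tt T't uT uW KQ uK k2 (fun y yK yN => yin y Kq KQ k2 yK yN)).
move=> noU.
case: (boolP [exists Kq in K4s D, (u' \in Kq) && (#|Kq :&: W| == 2)]).
  case/exists_inP => Kq KQ /andP[uK /eqP k2].
  apply: (fin T' T u' Kq T't Tt uT' uW' KQ uK k2) => y yK yN.
  by case: (yin y Kq KQ k2 yK yN); [right|left].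
move=> noU'.
have noK v : ~~ [exists Kq in K4s D, (v \in Kq) && (#|Kq :&: W| == 2)] ->
   forall Kq, Kq \in K4s D -> v \in Kq -> #|Kq :&: W| != 2.
  move=> nv Kq KQ vK; apply/negP => /eqP k2; move/negP: nv; apply.
  by apply/exists_inP; exists Kq => //; rewrite vK k2.
have s1 := sub u T uW Tt uT cT (noK u noU).
have s2 := sub u' T' uW' T't uT' cT' (noK u' noU').
case: (eqVneq u u') => [e|uu'].
  have TT : T' != T by rewrite eq_sym.
  by subst u'; have := s1 T' T't uT' TT; rewrite cT'.
have cA v Tv : v \in W -> Tv \in triangles D -> v \in Tv ->
    #|[set B in triangles D | (v \in B) && (B != Tv)]| = 3.
  move=> vW Tvt vTv.
  have -> : [set B in triangles D | (v \in B) && (B != Tv)] = [set B in triangles D | v \in B] :\ Tv.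
    apply/setP => x; rewrite !inE.
    by case: (x != Tv); rewrite ?andbT ?andbF.
  have := cardsD1 Tv [set B in triangles D | v \in B].
  have -> : Tv \in [set B in triangles D | v \in B] by rewrite inE Tvt vTv.
  have := aW v vW; rewrite /alpha_x => -> /eqP; rewrite add1n eqSS => /eqP <-. done.
set A := [set B in triangles D | (u \in B) && (B != T)].
set A' := [set B in triangles D | (u' \in B) && (B != T')].
have sub3 : A :|: A' \subset [set B in triangles D | #|B :&: W| == 3].
  apply/subsetP => B; rewrite /A /A' in_setU !in_set => /orP[] /andP[Bt /andP[uB BT]].
    have Bt' : B \in triangles D by rewrite inE.
    by rewrite Bt (s1 B Bt' uB BT).
  have Bt' : B \in triangles D by rewrite inE.
  by rewrite Bt (s2 B Bt' uB BT).
have h := subset_leq_card sub3.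
have := t3; rewrite /t_count => c4.
rewrite c4 in h.
have e := cardsUI A A'.
rewrite (cA u T uW Tt uT) (cA u' T' uW' T't uT') in e.
have : 1 < #|A :&: A'|.
  by rewrite -(leq_add2l #|A :|: A'|) e addn2 !ltnS.
case/card_gt1P => B1 [B2 [B1in B2in B12]].
move: B1in B2in; rewrite !inE => /andP[/andP[B1t /andP[uB1 _]] /andP[_ /andP[u'B1 _]]].
move=> /andP[/andP[B2t /andP[uB2 _]] /andP[_ /andP[u'B2 _]]].
have DB1 : B1 \in D by case/andP: B1t.
have DB2 : B2 \in D by case/andP: B2t.
by move: B12; rewrite (uniqB K uu' DB1 DB2 uB1 u'B1 uB2 u'B2) eqxx.
Qed.
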